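(* Let $g$ be the Diamond–Montgomery–Vorhauer function defined below. Assume $\rho=\beta+\mathrm{i}\gamma$ with $\beta\in[1/2,1)$ and $\gamma\ge1$, and let $a\ge4$. Then for $x\ge\mathrm{e}^{5a}$, \[-\int_{1}^{x}\frac{g(u^{1/a})}{a}(\log u)u^{\beta-1}\cos(\gamma\log u)\,\mathrm{d}u=-\frac{x^{\beta}\sin(\gamma\log x)}{\gamma}+O\Bigl(\frac{x^{\beta-1/(2a)}}{\gamma}+\frac{x^{\beta}}{\gamma^{2}}+\mathrm{e}^{5a\beta}\Bigr),\] while for $\mathrm{e}^{a}\le x<\mathrm{e}^{5a}$, \[-\int_{1}^{x}\frac{g(u^{1/a})}{a}(\log u)u^{\beta-1}\cos(\gamma\log u)\,\mathrm{d}u=O\Bigl(\frac{x^{\beta}}{\gamma}\Bigr).\] The implied constants are absolute (independent of $\rho$ and $a$).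
   Context: Let $G(z)=1-\frac{\mathrm{e}^{-z}-\mathrm{e}^{-2z}}{z}$. The function $g$ is the function supported on $[\mathrm{e},\infty)$ such that $\log G(z)=-\int_{1}^{\infty}g(x)x^{-z-1}\,\mathrm{d}x$ (for $\Re z$ large). It is known (Diamond–Montgomery–Vorhauer) that $g$ is nonnegative, continuous on $(\mathrm{e}^{2},\infty)$, continuously differentiable on $(\mathrm{e}^{4},\infty)$, on each interval $(\mathrm{e}^{m},\mathrm{e}^{m+1})$ ($m\ge1$ integer) is a polynomial in $\log x$ of degree at most $m-1$, and satisfies $g(x)\log x=1+O(x^{-1/2})$ for $x\ge\mathrm{e}^2$ and $(g(x)\log x)'\ll x^{-3/2}$ for $x\ge\mathrm{e}^5$. *)

(* Defs.v *)
From Stdlib Require Import Reals.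
From Coquelicot Require Import Coquelicot.
Open Scope R_scope.

Definition DMV_G (z : R) : R := 1 - (exp (- z) - exp (- (2 * z))) / z.

(* The defining property of the Diamond--Montgomery--Vorhauer function g:
   g is supported on [e, oo) and, for z large,
     log G(z) = - int_1^oo g(x) x^{-z-1} dx
   (stated for real z on a half-line; by Lerch's uniqueness theorem for the
   Laplace transform this determines g up to a null set). *)
Definition is_DMV_g (g : R -> R) : Prop :=
  (forall x, x < exp 1 -> g x = 0) /\
  exists z0 : R, 0 < z0 /\
    forall z : R, z0 <= z ->
      is_RInt_gen (fun x => g x * Rpower x (- z - 1))
                  (at_point 1) (Rbar_locally p_infty) (- ln (DMV_G z)).

Definition DMV_g_known_props (g : R -> R) : Prop :=
  (forall x, 0 <= g x) /\
  (forall x, exp 2 < x -> continuous g x) /\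
  (forall x, exp 4 < x -> ex_derive g x /\ continuous (Derive g) x) /\
  (forall m : nat, (1 <= m)%nat -> exists p : nat -> R,
     forall x, exp (INR m) < x < exp (INR m + 1) ->
       g x = sum_f_R0 (fun k => p k * ln x ^ k) (m - 1)) /\
  (exists K : R, forall x, exp 2 <= x ->
     Rabs (g x * ln x - 1) <= K * Rpower x (- (1/2))) /\
  (exists K : R, forall x, exp 5 <= x ->
     ex_derive (fun y => g y * ln y) x /\
     Rabs (Derive (fun y => g y * ln y) x) <= K * Rpower x (- (3/2))).

Definition DMV_I (g : R -> R) (beta gamma a x : R) : R :=
  - RInt (fun u => g (Rpower u (1 / a)) / a * ln u * Rpower u (beta - 1)
                   * cos (gamma * ln u)) 1 x.

(* Main.v *)
Require Import Defs.
From Stdlib Require Import Reals Lra Lia.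
From Coquelicot Require Import Coquelicot.
Open Scope R_scope.

Definition phi (b c u : R) := exp (b * ln u) * (b * cos (c * ln u) + c * sin (c * ln u)) / (b^2 + c^2).
Definition dphi (b c u : R) := Rpower u (b - 1) * cos (c * ln u).

Lemma Rpower_m1 u b : 0 < u -> Rpower u (b - 1) = exp (b * ln u) / u.
Proof.
  intros Hu. unfold Rpower. replace ((b-1) * ln u) with (b * ln u + - ln u) by ring.
  rewrite exp_plus, exp_Ropp, exp_ln by lra. reflexivity.
Qed.

Lemma phi_deriv b c u : 0 < u -> 0 < c -> is_derive (phi b c) u (dphi b c u).
Proof.
  intros Hu Hc. unfold phi, dphi. rewrite Rpower_m1 by lra.
  auto_derive.
  - repeat split; lra.

  - assert (b^2 + c^2 <> 0) by nra. field_simplify; [|lra|lra].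
    field. split; [lra|]. intro H'. apply H. replace (b^2+c^2) with ((b^2 * u + u * c^2)/u) by (field; lra). rewrite H'. field. lra.
Qed.

Lemma cmul (f g : R -> R) x : continuous f x -> continuous g x -> continuous (fun y => f y * g y) x.
Proof. intros; apply (continuous_mult f g); auto. Qed.
Lemma cplus (f g : R -> R) x : continuous f x -> continuous g x -> continuous (fun y => f y + g y) x.
Proof. intros; apply (continuous_plus f g); auto. Qed.

Lemma dcont (f : R -> R) x : ex_derive f x -> continuous f x.
Proof. intros H. apply (ex_derive_continuous (K:=R_AbsRing) (V:=R_NormedModule)). exact H. Qed.

Lemma phi_cont b c u : 0 < u -> 0 < c -> continuous (phi b c) u.
Proof. intros. apply dcont. eexists. apply phi_deriv; auto. Qed.

Lemma dphi_cont b c u : 0 < u -> continuous (dphi b c) u.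
Proof. intros. apply dcont. unfold dphi, Rpower. auto_derive. repeat split; lra. Qed.

Lemma ibp (h h' : R -> R) b c lo hi : 0 < lo <= hi -> 0 < c ->
  (forall u, lo <= u <= hi -> is_derive h u (h' u)) ->
  (forall u, lo <= u <= hi -> continuous h' u) ->
  is_RInt (fun u => h u * dphi b c u) lo hi
    (h hi * phi b c hi - h lo * phi b c lo - RInt (fun u => h' u * phi b c u) lo hi).
Proof.
  intros Hlo Hc Hd Hc'.
  assert (H1 : is_RInt (fun u => h' u * phi b c u + h u * dphi b c u) lo hi
             (minus (h hi * phi b c hi) (h lo * phi b c lo))).
  { apply (is_RInt_derive (fun u => h u * phi b c u)).
    - intros x Hx. rewrite Rmin_left, Rmax_right in Hx by lra.
      apply (is_derive_mult h (phi b c)); [apply Hd; lra| apply phi_deriv; lra|].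
      intros; apply Rmult_comm.
    - intros x Hx. rewrite Rmin_left, Rmax_right in Hx by lra.
      apply cplus; apply cmul.
      + apply Hc'; lra.
      + apply phi_cont; lra.
      + apply dcont. eexists. apply Hd; lra.
      + apply dphi_cont; lra. }
  assert (H2 : ex_RInt (fun u => h' u * phi b c u) lo hi).
  { apply (ex_RInt_continuous (V:=R_CompleteNormedModule)). intros z Hz. rewrite Rmin_left, Rmax_right in Hz by lra.
    apply cmul; [apply Hc'; lra| apply phi_cont; lra]. }
  apply (RInt_correct (V:=R_CompleteNormedModule)) in H2.
  pose proof (is_RInt_minus _ _ _ _ _ _ H1 H2) as H3.
  eapply is_RInt_ext in H3.
  2:{ intros x _. unfold minus, plus, opp; simpl. instantiate (1 := fun u => h u * dphi b c u). simpl. ring. }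
  unfold minus, plus, opp in H3; simpl in H3.
  replace (h hi * phi b c hi - h lo * phi b c lo - RInt (fun u : R => h' u * phi b c u) lo hi)
    with (h hi * phi b c hi + - (h lo * phi b c lo) + - RInt (fun u : R => h' u * phi b c u) lo hi) by ring.
  exact H3.
Qed.

Lemma RInt_abs_le (f w : R -> R) lo hi : lo <= hi -> ex_RInt f lo hi -> ex_RInt w lo hi ->
  (forall u, lo <= u <= hi -> Rabs (f u) <= w u) -> Rabs (RInt f lo hi) <= RInt w lo hi.
Proof.
  intros Hl Hf Hw Hb. apply Rabs_le. split.
  - rewrite <- (RInt_opp (V:=R_CompleteNormedModule)) by exact Hw.
    apply RInt_le; auto.
    + apply (ex_RInt_opp (V:=R_CompleteNormedModule)); auto.
    + intros x Hx. specialize (Hb x ltac:(lra)). unfold opp; simpl. apply Rabs_le_between in Hb. lra.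
  - apply RInt_le; auto. intros x Hx. specialize (Hb x ltac:(lra)). apply Rabs_le_between in Hb. lra.
Qed.

Lemma phi_bound b c u : 0 <= b <= 1 -> 1 <= c -> 0 < u -> Rabs (phi b c u) <= 2 * exp (b * ln u) / c.
Proof.
  intros Hb Hc Hu. unfold phi. pose proof (exp_pos (b * ln u)) as He.
  assert (Hn : b^2 + c^2 > 0) by nra.
  rewrite Rabs_div by lra. rewrite Rabs_mult, (Rabs_pos_eq (exp _)) by lra.
  rewrite (Rabs_pos_eq (b^2+c^2)) by lra.
  assert (HA : Rabs (b * cos (c * ln u) + c * sin (c * ln u)) <= 2 * c).
  { eapply Rle_trans; [apply Rabs_triang|]. rewrite !Rabs_mult, !(Rabs_pos_eq b), !(Rabs_pos_eq c) by lra.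
    pose proof (COS_bound (c * ln u)). pose proof (SIN_bound (c * ln u)).
    assert (Rabs (cos (c * ln u)) <= 1) by (apply Rabs_le; lra).
    assert (Rabs (sin (c * ln u)) <= 1) by (apply Rabs_le; lra).
    pose proof (Rabs_pos (cos (c * ln u))). pose proof (Rabs_pos (sin (c * ln u))). nra. }
  apply Rle_trans with (exp (b * ln u) * (2 * c) / (b^2+c^2)).
  { unfold Rdiv. apply Rmult_le_compat_r. { left; apply Rinv_0_lt_compat; lra. } apply Rmult_le_compat_l; lra. }
  assert (0 <= 2 * exp (b * ln u) / c - exp (b * ln u) * (2 * c) / (b ^ 2 + c ^ 2)).
  { replace (2 * exp (b * ln u) / c - exp (b * ln u) * (2 * c) / (b ^ 2 + c ^ 2))
      with (2 * exp (b * ln u) * b^2 / (c * (b^2 + c^2))) by (field; lra).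
    apply Rmult_le_pos; [nra|]. left; apply Rinv_0_lt_compat; nra. }
  lra.
Qed.

Lemma pow_int s lo hi : 0 < lo <= hi -> 0 < s ->
  is_RInt (fun u => exp ((s - 1) * ln u)) lo hi (exp (s * ln hi) / s - exp (s * ln lo) / s).
Proof.
  intros Hl Hs.
  assert (H := is_RInt_derive (fun u => exp (s * ln u) / s) (fun u => exp ((s - 1) * ln u)) lo hi).
  unfold minus, plus, opp in H; simpl in H. apply H.
  - intros x Hx. rewrite Rmin_left, Rmax_right in Hx by lra.
    change (exp ((s-1) * ln x)) with (Rpower x (s-1)). rewrite Rpower_m1 by lra.
    auto_derive; [lra|]. field. lra.
  - intros x Hx. rewrite Rmin_left, Rmax_right in Hx by lra. apply dcont. auto_derive. lra.
Qed.

Lemma pow_int_le s lo hi : 0 < lo <= hi -> 0 < s ->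
  ex_RInt (fun u => exp ((s - 1) * ln u)) lo hi /\
  RInt (fun u => exp ((s - 1) * ln u)) lo hi <= exp (s * ln hi) / s.
Proof.
  intros Hl Hs. pose proof (pow_int s lo hi Hl Hs) as H. split.
  - eexists; exact H.
  - rewrite (is_RInt_unique _ _ _ _ H). pose proof (exp_pos (s * ln lo)).
    assert (0 < exp (s * ln lo) / s) by (apply Rdiv_lt_0_compat; lra). lra.
Qed.

Lemma exp_b_mono b lo hi : 0 <= b -> 0 < lo <= hi -> exp (b * ln lo) <= exp (b * ln hi).
Proof.
  intros Hb Hl. destruct (Req_dec lo hi) as [->|Hne]; [lra|].
  assert (ln lo < ln hi) by (apply ln_increasing; lra).
  destruct (Req_dec b 0) as [->|]; [rewrite !Rmult_0_l; lra|].
  left; apply exp_increasing; nra.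
Qed.

Lemma ibp_bound (h h' w : R -> R) b c lo hi A : 0 < lo <= hi -> 0 <= b <= 1 -> 1 <= c ->
  (forall u, lo <= u <= hi -> is_derive h u (h' u)) ->
  (forall u, lo <= u <= hi -> continuous h' u) ->
  ex_RInt w lo hi ->
  (forall u, lo <= u <= hi -> Rabs (h' u * phi b c u) <= w u) ->
  Rabs (h lo) <= A -> Rabs (h hi) <= A ->
  ex_RInt (fun u => h u * dphi b c u) lo hi /\
  Rabs (RInt (fun u => h u * dphi b c u) lo hi) <= 4 * A * exp (b * ln hi) / c + RInt w lo hi.
Proof.
  intros Hl Hb Hc Hd Hc' Hw Hwb HA1 HA2.
  pose proof (ibp h h' b c lo hi Hl ltac:(lra) Hd Hc') as H.
  split; [eexists; exact H|].
  rewrite (is_RInt_unique _ _ _ _ H).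
  assert (Hex : ex_RInt (fun u => h' u * phi b c u) lo hi).
  { apply (ex_RInt_continuous (V:=R_CompleteNormedModule)). intros z Hz. rewrite Rmin_left, Rmax_right in Hz by lra.
    apply cmul; [apply Hc'; lra| apply phi_cont; lra]. }
  pose proof (RInt_abs_le _ _ lo hi ltac:(lra) Hex Hw Hwb).
  pose proof (phi_bound b c hi Hb Hc ltac:(lra)).
  pose proof (phi_bound b c lo Hb Hc ltac:(lra)).
  pose proof (exp_b_mono b lo hi ltac:(lra) Hl).
  pose proof (exp_pos (b * ln lo)).
  assert (Rabs (h hi * phi b c hi) <= A * (2 * exp (b * ln hi) / c)).
  { rewrite Rabs_mult. apply Rmult_le_compat; auto using Rabs_pos. }
  assert (Rabs (h lo * phi b c lo) <= A * (2 * exp (b * ln hi) / c)).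
  { rewrite Rabs_mult. apply Rmult_le_compat; auto using Rabs_pos.
    eapply Rle_trans; [eassumption|]. unfold Rdiv. apply Rmult_le_compat_r; [left; apply Rinv_0_lt_compat; lra|]. lra. }
  set (X := RInt (fun u : R => h' u * phi b c u) lo hi) in *.
  replace (4 * A * exp (b * ln hi) / c) with (A * (2 * exp (b * ln hi) / c) + A * (2 * exp (b * ln hi) / c)) by (field; lra).
  eapply Rle_trans; [apply Rabs_triang|]. unfold Rminus.
  eapply Rle_trans; [apply Rplus_le_compat_r; apply Rabs_triang|].
  rewrite !Rabs_Ropp. lra.
Qed.

Definition Pol (p : nat -> R) n t := sum_f_R0 (fun k => p k * t ^ k) n.
Definition DPol (p : nat -> R) n t := sum_f_R0 (fun k => p k * (INR k * t ^ Nat.pred k)) n.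

Lemma Pol_deriv p n t : is_derive (Pol p n) t (DPol p n t).
Proof.
  induction n as [|n IH].
  - unfold Pol, DPol; simpl. auto_derive; [exact I| simpl; ring].
  - unfold Pol, DPol; simpl.
    apply (is_derive_plus (K:=R_AbsRing) (V:=R_NormedModule) (fun t => sum_f_R0 (fun k : nat => p k * t ^ k) n) (fun t => p (S n) * (t * t ^ n))).
    + exact IH.
    + apply is_derive_scal. assert (H := is_derive_pow (fun x => x) (S n) t 1 (is_derive_id t)).
      simpl in H. replace (match n with | 0%nat => 1 | S _ => INR n + 1 end * 1) with (INR (S n)) in H.
      2:{ rewrite S_INR. destruct n; simpl; ring. }
      exact H.
Qed.

Lemma sum_cont (f : nat -> R -> R) n t : (forall k, continuous (f k) t) ->
  continuous (fun x => sum_f_R0 (fun k => f k x) n) t.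
Proof.
  intros H. induction n as [|n IH]; simpl.
  - apply H.
  - apply cplus; auto.
Qed.

Lemma DPol_cont p n t : continuous (DPol p n) t.
Proof.
  unfold DPol. apply (sum_cont (fun k x => p k * (INR k * x ^ Nat.pred k))).
  intros k. apply dcont. auto_derive. exact I.
Qed.

Lemma Pol_cont p n t : continuous (Pol p n) t.
Proof. apply dcont. eexists. apply Pol_deriv. Qed.

Lemma cont_bound (f : R -> R) lo hi : lo <= hi -> (forall t, continuous f t) ->
  exists M, 0 <= M /\ forall t, lo <= t <= hi -> Rabs (f t) <= M.
Proof.
  intros Hl Hc.
  destruct (continuity_ab_maj (fun t => Rabs (f t)) lo hi Hl) as [x [Hx1 Hx2]].
  { intros c _. apply continuity_pt_filterlim.
    apply (continuous_comp f Rabs); [apply Hc|]. apply continuous_Rabs. }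
  exists (Rabs (f x)). split; [apply Rabs_pos|]. auto.
Qed.

Definition Fint (g : R -> R) (b c a : R) := fun u =>
  g (Rpower u (1 / a)) / a * ln u * Rpower u (b - 1) * cos (c * ln u).

Lemma exp_le' x y : x <= y -> exp x <= exp y.
Proof. intros [H|H]; [left; apply exp_increasing; auto|rewrite H; lra]. Qed.

Lemma ln_bounds a m0 u : 0 < a -> exp (a * m0) <= u <= exp (a * (m0 + 1)) -> m0 <= ln u / a <= m0 + 1.
Proof.
  intros Ha Hu. pose proof (exp_pos (a * m0)).
  assert (H1 : a * m0 <= ln u) by (rewrite <- (ln_exp (a * m0)); apply ln_le; lra).
  assert (H2 : ln u <= a * (m0 + 1)) by (rewrite <- (ln_exp (a * (m0+1))); apply ln_le; lra).
  split; apply Rmult_le_reg_l with a; try lra; field_simplify; lra.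
Qed.

Lemma w_int K b lo hi : 0 < lo <= hi -> 0 < b ->
  ex_RInt (fun u => K * exp ((b - 1) * ln u)) lo hi /\
  RInt (fun u => K * exp ((b - 1) * ln u)) lo hi = K * RInt (fun u => exp ((b - 1) * ln u)) lo hi.
Proof.
  intros Hl Hb. destruct (pow_int_le b lo hi Hl Hb) as [Hex _].
  split.
  - apply (ex_RInt_scal (V:=R_NormedModule) _ _ _ K Hex).
  - apply (RInt_scal (V:=R_CompleteNormedModule) _ _ _ K Hex).
Qed.

Lemma piece_gen (g Q Q' : R -> R) m0 : 0 <= m0 ->
  (forall t, is_derive Q t (Q' t)) -> (forall t, continuous Q' t) ->
  (forall v, exp m0 < v < exp (m0 + 1) -> g v * ln v = Q (ln v)) ->
  exists M, 0 <= M /\ forall b c a lo hi, 1/2 <= b <= 1 -> 1 <= c -> 1 <= a ->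
    exp (a * m0) <= lo -> lo <= hi -> hi <= exp (a * (m0 + 1)) ->
    ex_RInt (Fint g b c a) lo hi /\ Rabs (RInt (Fint g b c a) lo hi) <= M * Rpower hi b / c.
Proof.
  intros Hm HQ HQ' Hg.
  destruct (cont_bound Q m0 (m0+1) ltac:(lra)) as [MQ [HMQ HMQb]].
  { intros t. apply dcont. eexists; apply HQ. }
  destruct (cont_bound Q' m0 (m0+1) ltac:(lra) HQ') as [MD [HMD HMDb]].
  exists (4 * MQ + 4 * MD). split; [lra|].
  intros b c a lo hi Hb Hc Ha Hlo Hlh Hhi.
  pose proof (exp_pos (a * m0)).
  assert (Hl : 0 < lo <= hi) by lra.
  set (h := fun u => Q (ln u / a)).
  set (h' := fun u => Q' (ln u / a) * / (a * u)).
  assert (Hd : forall u, lo <= u <= hi -> is_derive h u (h' u)).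
  { intros u Hu. unfold h, h'.
    assert (Hl' : is_derive (fun u => ln u / a) u (/ (a * u))).
    { auto_derive; [lra|]. field; lra. }
    pose proof (is_derive_comp Q (fun u => ln u / a) u _ _ (HQ (ln u / a)) Hl') as HH.
    unfold scal in HH; simpl in HH; unfold mult in HH; simpl in HH.
    rewrite Rmult_comm. exact HH. }
  assert (Hc' : forall u, lo <= u <= hi -> continuous h' u).
  { intros u Hu. unfold h'. apply cmul.
    - apply (continuous_comp (fun u => ln u / a) Q'); [|apply HQ'].
      apply dcont. auto_derive. lra.
    - apply dcont. auto_derive. apply Rmult_integral_contrapositive; lra. }
  assert (Hbnd := fun u Hu => ln_bounds a m0 u ltac:(lra) Hu).
  destruct (w_int (2 * MD / c) b lo hi Hl ltac:(lra)) as [Hwex Hweq].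
  destruct (pow_int_le b lo hi Hl ltac:(lra)) as [_ Hple].
  destruct (ibp_bound h h' (fun u => 2 * MD / c * exp ((b - 1) * ln u)) b c lo hi MQ Hl ltac:(lra) Hc Hd Hc' Hwex)
    as [Hex Hbound].
  - intros u Hu. unfold h'. pose proof (phi_bound b c u ltac:(lra) Hc ltac:(lra)).
    change (exp ((b - 1) * ln u)) with (Rpower u (b - 1)). rewrite Rpower_m1 by lra.
    rewrite !Rabs_mult. pose proof (HMDb (ln u / a) (Hbnd u ltac:(lra))).
    assert (HI : Rabs (/ (a * u)) <= / u).
    { rewrite Rabs_pos_eq by (left; apply Rinv_0_lt_compat; nra).
      apply Rinv_le_contravar; nra. }
    pose proof (Rabs_pos (Q' (ln u / a))). pose proof (Rabs_pos (/ (a*u))). pose proof (Rabs_pos (phi b c u)).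
    apply Rle_trans with (MD * / u * (2 * exp (b * ln u) / c)).
    { apply Rmult_le_compat; auto; [apply Rmult_le_pos; auto| apply Rmult_le_compat; auto]. }
    right. field. lra.
  - unfold h. apply HMQb, Hbnd; lra.
  - unfold h. apply HMQb, Hbnd; lra.
  - assert (Heq : forall u, Rmin lo hi < u < Rmax lo hi -> h u * dphi b c u = Fint g b c a u).
    { intros u Hu. rewrite Rmin_left, Rmax_right in Hu by lra. unfold h, dphi, Fint.
      assert (Hv : ln (Rpower u (1 / a)) = ln u / a) by (unfold Rpower; rewrite ln_exp; field; lra).
      assert (H1 : a * m0 < ln u).
      { apply Rle_lt_trans with (ln lo); [rewrite <- (ln_exp (a * m0)); apply ln_le; lra|]. apply ln_increasing; lra. }
      assert (H2 : ln u < a * (m0 + 1)).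
      { apply Rlt_le_trans with (ln hi); [apply ln_increasing; lra|]. rewrite <- (ln_exp (a * (m0+1))); apply ln_le; lra. }
      assert (Hr : exp m0 < Rpower u (1 / a) < exp (m0 + 1)).
      { unfold Rpower. split; apply exp_increasing; apply Rmult_lt_reg_l with a; try lra; field_simplify; lra. }
      pose proof (Hg _ Hr) as Hgv. rewrite Hv in Hgv. rewrite <- Hgv.
      field. lra. }
    split.
    + eapply ex_RInt_ext; [exact Heq|exact Hex].
    + rewrite <- (RInt_ext _ _ _ _ Heq).
      eapply Rle_trans; [exact Hbound|].
      rewrite Hweq. unfold Rpower.
      pose proof (exp_pos (b * ln hi)).
      assert (2 * MD / c * RInt (fun u : R => exp ((b - 1) * ln u)) lo hi <= 2 * MD / c * (exp (b * ln hi) / b)).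
      { apply Rmult_le_compat_l; auto. apply Rmult_le_pos; [lra|]. left; apply Rinv_0_lt_compat; lra. }
      assert (2 * MD / c * (exp (b * ln hi) / b) <= 4 * MD * exp (b * ln hi) / c).
      { assert (0 <= 4 * MD * exp (b * ln hi) / c - 2 * MD / c * (exp (b * ln hi) / b)); [|lra].
        replace (4 * MD * exp (b * ln hi) / c - 2 * MD / c * (exp (b * ln hi) / b))
          with (2 * MD * exp (b * ln hi) * (2 * b - 1) / (c * b)) by (field; lra).
        apply Rmult_le_pos; [apply Rmult_le_pos; nra|]. left; apply Rinv_0_lt_compat; nra. }
      assert (4 * MQ * exp (b * ln hi) / c + 4 * MD * exp (b * ln hi) / c = (4 * MQ + 4 * MD) * exp (b * ln hi) / c) by (field; lra).
      lra.
Qed.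

Lemma main_term b c x : 0 <= b <= 1 -> 1 <= c -> 0 < x ->
  Rabs (phi b c x - exp (b * ln x) * sin (c * ln x) / c) <= 2 * exp (b * ln x) / c ^ 2.
Proof.
  intros Hb Hc Hx. unfold phi. pose proof (exp_pos (b * ln x)) as HE.
  set (E := exp (b * ln x)) in *. set (S := sin (c * ln x)). set (Co := cos (c * ln x)).
  assert (Hn : b^2 + c^2 > 0) by nra.
  replace (E * (b * Co + c * S) / (b ^ 2 + c ^ 2) - E * S / c)
    with (E * b * (c * Co - b * S) / (c * (b^2 + c^2))) by (field; lra).
  assert (HA : Rabs (c * Co - b * S) <= 2 * c).
  { unfold Rminus. eapply Rle_trans; [apply Rabs_triang|]. rewrite Rabs_Ropp, !Rabs_mult, !(Rabs_pos_eq b), !(Rabs_pos_eq c) by lra.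
    pose proof (COS_bound (c * ln x)). pose proof (SIN_bound (c * ln x)).
    assert (Rabs Co <= 1) by (apply Rabs_le; unfold Co; lra).
    assert (Rabs S <= 1) by (apply Rabs_le; unfold S; lra).
    pose proof (Rabs_pos Co). pose proof (Rabs_pos S). nra. }
  rewrite Rabs_div by nra. rewrite Rabs_mult, (Rabs_pos_eq (E * b)) by nra.
  rewrite (Rabs_pos_eq (c * _)) by nra.
  apply Rle_trans with (E * b * (2 * c) / (c * (b ^ 2 + c ^ 2))).
  { unfold Rdiv. apply Rmult_le_compat_r; [left; apply Rinv_0_lt_compat; nra|]. apply Rmult_le_compat_l; nra. }
  assert (0 <= 2 * E / c ^ 2 - E * b * (2 * c) / (c * (b ^ 2 + c ^ 2))); [|lra].
  replace (2 * E / c ^ 2 - E * b * (2 * c) / (c * (b ^ 2 + c ^ 2)))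
    with (2 * E * (b^2 + c^2 - b * c^2) / (c^2 * (b^2 + c^2))) by (field; nra).
  assert (0 <= c^2 * (1 - b)) by (apply Rmult_le_pos; nra).
  apply Rmult_le_pos; [apply Rmult_le_pos; nra|]. left; apply Rinv_0_lt_compat. apply Rmult_lt_0_compat; nra.
Qed.

Lemma Rpower_1a_deriv a u : 0 < a -> 0 < u ->
  is_derive (fun u => Rpower u (1 / a)) u (Rpower u (1 / a) / (a * u)).
Proof. intros Ha Hu. unfold Rpower. auto_derive; [lra|]. field. lra. Qed.

Lemma ln_Rpower_1a a u : 0 < a -> ln (Rpower u (1 / a)) = ln u / a.
Proof. intros Ha. unfold Rpower. rewrite ln_exp. field. lra. Qed.

Lemma tail (g : R -> R) K1 K2 :
  (forall x, exp 2 < x -> continuous g x) ->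
  (forall x, exp 4 < x -> ex_derive g x /\ continuous (Derive g) x) ->
  (forall x, exp 2 <= x -> Rabs (g x * ln x - 1) <= K1 * Rpower x (- (1/2))) ->
  (forall x, exp 5 <= x -> ex_derive (fun y => g y * ln y) x /\
     Rabs (Derive (fun y => g y * ln y) x) <= K2 * Rpower x (- (3/2))) ->
  forall b c a x, 1/2 <= b < 1 -> 1 <= c -> 4 <= a -> exp (5 * a) <= x ->
  ex_RInt (Fint g b c a) (exp (5 * a)) x /\
  Rabs (RInt (Fint g b c a) (exp (5 * a)) x - Rpower x b * sin (c * ln x) / c)
   <= 2 * (1 + Rabs K1) * exp (5 * a * b)
      + (6 * Rabs K2 + 2 * Rabs K1) * Rpower x (b - 1 / (2 * a)) / c
      + 2 * Rpower x b / c ^ 2.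
Proof.
  intros Hgc Hgd HK1 HK2 b c a x Hb Hc Ha Hx.
  set (E := exp (5 * a)) in *.
  assert (HE5 : exp 5 <= E) by (apply exp_le'; lra).
  assert (H45 : exp 4 < exp 5) by (apply exp_increasing; lra).
  assert (H24 : exp 2 < exp 4) by (apply exp_increasing; lra).
  assert (H02 : 1 < exp 2) by (rewrite <- exp_0; apply exp_increasing; lra).
  assert (HE0 : 0 < E) by lra.
  set (k := fun v => g v * ln v).
  set (k' := fun v => Derive g v * ln v + g v * / v).
  assert (Hk : forall v, exp 4 < v -> is_derive k v (k' v)).
  { intros v Hv. unfold k, k'.
    assert (Hln : is_derive ln v (/ v)) by (auto_derive; [lra| field; lra]).
    pose proof (is_derive_mult g ln v _ _ (Derive_correct _ _ (proj1 (Hgd v Hv))) Hln) as HH.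
    apply HH. intros; apply Rmult_comm. }
  assert (Hkc : forall v, exp 4 < v -> continuous k' v).
  { intros v Hv. unfold k'. apply cplus; apply cmul.
    - apply (proj2 (Hgd v Hv)).
    - apply dcont. auto_derive. lra.
    - apply Hgc. lra.
    - apply dcont. auto_derive. lra. }
  assert (Hvge : forall u, E <= u -> exp 5 <= Rpower u (1 / a)).
  { intros u Hu. unfold Rpower. apply exp_le'.
    assert (5 * a <= ln u) by (unfold E in Hu; rewrite <- (ln_exp (5 * a)); apply ln_le; [apply exp_pos|lra]).
    apply Rmult_le_reg_l with a; [lra|]. field_simplify; lra. }
  set (h := fun u => k (Rpower u (1 / a))).
  set (h' := fun u => k' (Rpower u (1 / a)) * (Rpower u (1 / a) / (a * u))).
  assert (Hd : forall u, E <= u <= x -> is_derive h u (h' u)).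
  { intros u Hu. unfold h, h'.
    pose proof (is_derive_comp k (fun u => Rpower u (1 / a)) u _ _
                  (Hk (Rpower u (1 / a)) ltac:(pose proof (Hvge u ltac:(lra)); lra)) (Rpower_1a_deriv a u ltac:(lra) ltac:(lra))) as HH.
    unfold scal in HH; simpl in HH; unfold mult in HH; simpl in HH.
    rewrite Rmult_comm. exact HH. }
  assert (Hc' : forall u, E <= u <= x -> continuous h' u).
  { intros u Hu. unfold h'. apply cmul.
    - apply (continuous_comp (fun u => Rpower u (1 / a)) k').
      + apply dcont. eexists. apply Rpower_1a_deriv; lra.
      + apply Hkc. pose proof (Hvge u ltac:(lra)); lra.
    - apply dcont. unfold Rpower. auto_derive. repeat split; try lra. apply Rmult_integral_contrapositive; lra. }
  pose proof (ibp h h' b c E x ltac:(lra) ltac:(lra) Hd Hc') as HI.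
  assert (Heq : forall u, Rmin E x < u < Rmax E x -> h u * dphi b c u = Fint g b c a u).
  { intros u Hu. rewrite Rmin_left, Rmax_right in Hu by lra. unfold h, k, dphi, Fint.
    rewrite ln_Rpower_1a by lra. field. lra. }
  assert (HI' := is_RInt_ext _ _ _ _ _ Heq HI).
  split; [eexists; exact HI'|].
  rewrite (is_RInt_unique _ _ _ _ HI').
  set (sx := b - 1 / (2 * a)).
  assert (Hia : 1 / (2 * a) <= 1 / 8). { unfold Rdiv. rewrite !Rmult_1_l. apply Rinv_le_contravar; lra. }
  assert (Hsx : 3/8 <= sx) by (unfold sx; lra).
  assert (HRv : forall u y, 0 < u -> Rpower (Rpower u (1 / a)) y = exp (y / a * ln u)).
  { intros u y Hu. unfold Rpower at 1. rewrite ln_Rpower_1a by lra. f_equal. field. lra. }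
  assert (HT1 : Rabs (h x * phi b c x - Rpower x b * sin (c * ln x) / c)
                <= 2 * Rabs K1 * Rpower x sx / c + 2 * Rpower x b / c ^ 2).
  { replace (h x * phi b c x - Rpower x b * sin (c * ln x) / c)
      with ((h x - 1) * phi b c x + (phi b c x - exp (b * ln x) * sin (c * ln x) / c)) by (unfold Rpower; ring).
    eapply Rle_trans; [apply Rabs_triang|].
    apply Rplus_le_compat; [|apply main_term; lra].
    rewrite Rabs_mult.
    assert (Hv := Hvge x ltac:(lra)).
    pose proof (HK1 (Rpower x (1 / a)) ltac:(lra)) as HK.
    rewrite HRv in HK by lra.
    assert (Hk1 : Rabs (h x - 1) <= Rabs K1 * exp (- (1 / 2) / a * ln x)).
    { unfold h, k. eapply Rle_trans; [exact HK|]. apply Rmult_le_compat_r; [left; apply exp_pos|]. apply Rle_abs. }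
    pose proof (phi_bound b c x ltac:(lra) Hc ltac:(lra)).
    apply Rle_trans with (Rabs K1 * exp (- (1 / 2) / a * ln x) * (2 * exp (b * ln x) / c)).
    { apply Rmult_le_compat; auto using Rabs_pos. }
    right. unfold Rpower, sx. replace ((b - 1 / (2 * a)) * ln x) with (- (1 / 2) / a * ln x + b * ln x) by (field; lra).
    rewrite exp_plus. field. lra. }
  assert (HT2 : Rabs (h E * phi b c E) <= 2 * (1 + Rabs K1) * exp (5 * a * b)).
  { rewrite Rabs_mult.
    assert (Hv := Hvge E ltac:(lra)).
    pose proof (HK1 (Rpower E (1 / a)) ltac:(lra)) as HK.
    assert (Hp : Rpower (Rpower E (1 / a)) (- (1 / 2)) <= 1).
    { rewrite HRv by lra. apply Rle_trans with (exp 0); [|rewrite exp_0; lra]. apply exp_le'.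
      assert (HlE : ln E = 5 * a) by apply ln_exp. rewrite HlE.
      replace (- (1 / 2) / a * (5 * a)) with (- (5/2)) by (field; lra). lra. }
    assert (Hh : Rabs (h E) <= 1 + Rabs K1).
    { unfold h, k. replace (g (Rpower E (1 / a)) * ln (Rpower E (1 / a))) with
        ((g (Rpower E (1 / a)) * ln (Rpower E (1 / a)) - 1) + 1) by ring.
      eapply Rle_trans; [apply Rabs_triang|]. rewrite Rabs_R1.
      assert (K1 * Rpower (Rpower E (1 / a)) (- (1 / 2)) <= Rabs K1).
      { assert (0 < Rpower (Rpower E (1 / a)) (- (1 / 2))) by apply exp_pos.
        pose proof (Rle_abs K1). pose proof (Rabs_pos K1).
        apply Rle_trans with (Rabs K1 * Rpower (Rpower E (1 / a)) (- (1 / 2))); [apply Rmult_le_compat_r; lra|].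
        nra. }
      lra. }
    pose proof (phi_bound b c E ltac:(lra) Hc ltac:(lra)).
    assert (HlnE : ln E = 5 * a) by (unfold E; apply ln_exp).
    rewrite HlnE in H. pose proof (exp_pos (b * (5 * a))).
    apply Rle_trans with ((1 + Rabs K1) * (2 * exp (b * (5 * a)) / c)).
    { apply Rmult_le_compat; auto using Rabs_pos. }
    replace (5 * a * b) with (b * (5 * a)) by ring.
    assert (2 * exp (b * (5 * a)) / c <= 2 * exp (b * (5 * a))).
    { unfold Rdiv. rewrite <- (Rmult_1_r (2 * exp (b * (5 * a)))) at 2. apply Rmult_le_compat_l; [lra|].
      rewrite <- Rinv_1. apply Rinv_le_contravar; lra. }
    pose proof (Rabs_pos K1). nra. }
  assert (HT3 : Rabs (RInt (fun u => h' u * phi b c u) E x) <= 6 * Rabs K2 * Rpower x sx / c).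
  { destruct (w_int (2 * Rabs K2 / c) sx E x ltac:(lra) ltac:(lra)) as [Hwex Hweq].
    destruct (pow_int_le sx E x ltac:(lra) ltac:(lra)) as [_ Hple].
    assert (Hex : ex_RInt (fun u => h' u * phi b c u) E x).
    { apply (ex_RInt_continuous (V:=R_CompleteNormedModule)). intros z Hz. rewrite Rmin_left, Rmax_right in Hz by lra.
      apply cmul; [apply Hc'; lra| apply phi_cont; lra]. }
    eapply Rle_trans; [apply (RInt_abs_le _ _ E x ltac:(lra) Hex Hwex)|].
    - intros u Hu. unfold h'.
      assert (Hv := Hvge u ltac:(lra)).
      destruct (HK2 (Rpower u (1 / a)) Hv) as [_ HK].
      fold k in HK. rewrite (is_derive_unique k _ _ (Hk (Rpower u (1 / a)) ltac:(lra))) in HK.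
      rewrite HRv in HK by lra.
      pose proof (phi_bound b c u ltac:(lra) Hc ltac:(lra)).
      rewrite !Rabs_mult.
      assert (Hq : Rabs (Rpower u (1 / a) / (a * u)) = exp (1 / a * ln u) / (a * u)).
      { rewrite Rabs_pos_eq; [reflexivity|]. unfold Rpower. left; apply Rdiv_lt_0_compat; [apply exp_pos|nra]. }
      rewrite Hq.
      assert (HK' : Rabs (k' (Rpower u (1 / a))) <= Rabs K2 * exp (- (3 / 2) / a * ln u)).
      { eapply Rle_trans; [exact HK|]. apply Rmult_le_compat_r; [left; apply exp_pos|]. apply Rle_abs. }
      pose proof (exp_pos (1 / a * ln u)). pose proof (Rabs_pos (phi b c u)). pose proof (Rabs_pos (k' (Rpower u (1 / a)))).
      assert (0 <= exp (1 / a * ln u) / (a * u)) by (left; apply Rdiv_lt_0_compat; nra).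
      apply Rle_trans with (Rabs K2 * exp (- (3 / 2) / a * ln u) * (exp (1 / a * ln u) / (a * u)) * (2 * exp (b * ln u) / c)).
      { apply Rmult_le_compat; try apply Rmult_le_pos; auto. apply Rmult_le_compat_r; auto. }
      assert (Hid : exp ((sx - 1) * ln u) = exp (- (3 / 2) / a * ln u) * exp (1 / a * ln u) * exp (b * ln u) / u).
      { assert (Hiu : / u = exp (- ln u)) by (rewrite exp_Ropp, exp_ln; lra).
        rewrite <- !exp_plus. unfold Rdiv. rewrite Hiu, <- exp_plus.
        f_equal. unfold sx. field. lra. }
      rewrite Hid.
      pose proof (exp_pos (- (3 / 2) / a * ln u)). pose proof (exp_pos (b * ln u)). pose proof (Rabs_pos K2).
      set (P1 := exp (- (3 / 2) / a * ln u)) in *. set (P2 := exp (1 / a * ln u)) in *. set (P3 := exp (b * ln u)) in *.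
      assert (0 <= Rabs K2 * P1 * P2 * P3) by (repeat apply Rmult_le_pos; lra).
      replace (Rabs K2 * P1 * (P2 / (a * u)) * (2 * P3 / c)) with ((Rabs K2 * P1 * P2 * P3) * (2 / c) * / a * / u) by (field; lra).
      replace (2 * Rabs K2 / c * (P1 * P2 * P3 / u)) with ((Rabs K2 * P1 * P2 * P3) * (2 / c) * 1 * / u) by (field; lra).
      apply Rmult_le_compat_r; [left; apply Rinv_0_lt_compat; lra|].
      apply Rmult_le_compat_l; [apply Rmult_le_pos; [lra|]; left; apply Rdiv_lt_0_compat; lra|].
      rewrite <- Rinv_1. apply Rinv_le_contravar; lra.
    - rewrite Hweq. unfold Rpower.
      pose proof (exp_pos (sx * ln x)). pose proof (Rabs_pos K2).
      apply Rle_trans with (2 * Rabs K2 / c * (exp (sx * ln x) / sx)).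
      { apply Rmult_le_compat_l; auto. apply Rmult_le_pos; [lra|]. left; apply Rinv_0_lt_compat; lra. }
      assert (0 <= 6 * Rabs K2 * exp (sx * ln x) / c - 2 * Rabs K2 / c * (exp (sx * ln x) / sx)); [|lra].
      replace (6 * Rabs K2 * exp (sx * ln x) / c - 2 * Rabs K2 / c * (exp (sx * ln x) / sx))
        with (2 * Rabs K2 * exp (sx * ln x) * (3 * sx - 1) / (c * sx)) by (field; lra).
      apply Rmult_le_pos; [apply Rmult_le_pos; [apply Rmult_le_pos|]; lra|]. left; apply Rinv_0_lt_compat; nra. }
  set (T3 := RInt (fun u => h' u * phi b c u) E x) in *.
  replace (h x * phi b c x - h E * phi b c E - T3 - Rpower x b * sin (c * ln x) / c)
    with ((h x * phi b c x - Rpower x b * sin (c * ln x) / c) + (- (h E * phi b c E)) + (- T3)) by ring.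
  eapply Rle_trans; [apply Rabs_triang|]. rewrite Rabs_Ropp.
  eapply Rle_trans; [apply Rplus_le_compat_r; apply Rabs_triang|]. rewrite Rabs_Ropp.
  assert (Rpower x sx / c * (6 * Rabs K2 + 2 * Rabs K1) = (6 * Rabs K2 + 2 * Rabs K1) * Rpower x sx / c) by (field; lra).
  assert (6 * Rabs K2 * Rpower x sx / c + 2 * Rabs K1 * Rpower x sx / c = (6 * Rabs K2 + 2 * Rabs K1) * Rpower x sx / c) by (field; lra).
  lra.
Qed.

Lemma step (F : R -> R) lo mid x S M b c : lo <= mid <= x -> 0 < mid -> 0 <= b -> 0 < c -> 0 <= S ->
  ex_RInt F lo mid -> Rabs (RInt F lo mid) <= S * Rpower mid b / c ->
  ex_RInt F mid x -> Rabs (RInt F mid x) <= M * Rpower x b / c ->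
  ex_RInt F lo x /\ Rabs (RInt F lo x) <= (S + M) * Rpower x b / c.
Proof.
  intros Hl Hm Hb Hc HS E1 B1 E2 B2.
  split; [apply (ex_RInt_Chasles (V:=R_NormedModule) F lo mid x); auto|].
  rewrite <- (RInt_Chasles (V:=R_CompleteNormedModule) F lo mid x E1 E2).
  unfold plus; simpl.
  eapply Rle_trans; [apply Rabs_triang|].
  assert (S * Rpower mid b / c <= S * Rpower x b / c).
  { unfold Rdiv. apply Rmult_le_compat_r; [left; apply Rinv_0_lt_compat; lra|].
    apply Rmult_le_compat_l; auto. unfold Rpower. apply exp_b_mono; lra. }
  assert ((S + M) * Rpower x b / c = S * Rpower x b / c + M * Rpower x b / c) by (field; lra).
  lra.
Qed.

Lemma zero_piece (g : R -> R) b c a : 0 < a -> (forall x, x < exp 1 -> g x = 0) ->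
  ex_RInt (Fint g b c a) 1 (exp a) /\ RInt (Fint g b c a) 1 (exp a) = 0.
Proof.
  intros Ha Hg.
  assert (H1 : 1 <= exp a) by (rewrite <- exp_0; apply exp_le'; lra).
  assert (Heq : forall u, Rmin 1 (exp a) < u < Rmax 1 (exp a) -> (fun _ => 0) u = Fint g b c a u).
  { intros u Hu. rewrite Rmin_left, Rmax_right in Hu by lra. unfold Fint.
    rewrite Hg; [unfold Rdiv; ring|].
    unfold Rpower. apply exp_increasing.
    assert (ln u < a) by (rewrite <- (ln_exp a); apply ln_increasing; lra).
    apply Rmult_lt_reg_l with a; [lra|]. field_simplify; lra. }
  split.
  - eapply ex_RInt_ext; [exact Heq|]. apply (ex_RInt_const (V:=R_NormedModule)).
  - rewrite <- (RInt_ext _ _ _ _ Heq). rewrite RInt_const. unfold scal; simpl; unfold mult; simpl. ring.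
Qed.

Lemma piece_nat (g : R -> R) (m : nat) : (1 <= m)%nat ->
  (exists p : nat -> R, forall x, exp (INR m) < x < exp (INR m + 1) ->
       g x = sum_f_R0 (fun k => p k * ln x ^ k) (m - 1)) ->
  exists M, 0 <= M /\ forall b c a lo hi, 1/2 <= b <= 1 -> 1 <= c -> 1 <= a ->
    exp (a * INR m) <= lo -> lo <= hi -> hi <= exp (a * (INR m + 1)) ->
    ex_RInt (Fint g b c a) lo hi /\ Rabs (RInt (Fint g b c a) lo hi) <= M * Rpower hi b / c.
Proof.
  intros Hm [p Hp].
  apply (piece_gen g (fun t => t * Pol p (m - 1) t) (fun t => 1 * Pol p (m - 1) t + t * DPol p (m - 1) t)).
  - apply pos_INR.
  - intros t. apply (is_derive_mult (fun t => t) (Pol p (m - 1))); [auto_derive; auto|apply Pol_deriv|].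
    intros; apply Rmult_comm.
  - intros t. apply cplus; apply cmul.
    + apply continuous_const.
    + apply Pol_cont.
    + apply continuous_id.
    + apply DPol_cont.
  - intros v Hv. rewrite Hp by exact Hv. unfold Pol. ring.
Qed.

Lemma weaken (I S T y b c : R) : S <= T -> 0 < c -> I <= S * Rpower y b / c -> I <= T * Rpower y b / c.
Proof.
  intros HST Hc HI. eapply Rle_trans; [exact HI|]. unfold Rdiv.
  apply Rmult_le_compat_r; [left; apply Rinv_0_lt_compat; lra|].
  apply Rmult_le_compat_r; [left; apply exp_pos|lra].
Qed.

Theorem lemma4p2 (g : R -> R) (Hg : is_DMV_g g) (Hprops : DMV_g_known_props g) :
  exists C : R,
    forall beta gamma a x : R,
      1/2 <= beta < 1 -> 1 <= gamma -> 4 <= a ->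
      (exp (5 * a) <= x ->
         Rabs (DMV_I g beta gamma a x
               - (- (Rpower x beta * sin (gamma * ln x)) / gamma))
         <= C * (Rpower x (beta - 1 / (2 * a)) / gamma
                 + Rpower x beta / gamma ^ 2
                 + exp (5 * a * beta))) /\
      (exp a <= x < exp (5 * a) ->
         Rabs (DMV_I g beta gamma a x) <= C * (Rpower x beta / gamma)).
Proof.
  destruct Hg as [Hg0 _].
  destruct Hprops as [_ [Hgc [Hgd [Hpoly [[K1 HK1] [K2 HK2]]]]]].
  destruct (piece_nat g 1 ltac:(lia) (Hpoly 1%nat ltac:(lia))) as [M1 [HM1 P1]].
  destruct (piece_nat g 2 ltac:(lia) (Hpoly 2%nat ltac:(lia))) as [M2 [HM2 P2]].
  destruct (piece_nat g 3 ltac:(lia) (Hpoly 3%nat ltac:(lia))) as [M3 [HM3 P3]].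
  destruct (piece_nat g 4 ltac:(lia) (Hpoly 4%nat ltac:(lia))) as [M4 [HM4 P4]].
  assert (I1 : INR 1 = 1) by reflexivity.
  assert (I2 : INR 2 = 2) by (simpl; ring).
  assert (I3 : INR 3 = 3) by (simpl; ring).
  assert (I4 : INR 4 = 4) by (simpl; ring).
  rewrite I1 in P1. rewrite I2 in P2. rewrite I3 in P3. rewrite I4 in P4.
  set (Mall := M1 + M2 + M3 + M4).
  assert (Mid : forall b c a x, 1/2 <= b < 1 -> 1 <= c -> 4 <= a -> exp a <= x <= exp (5 * a) ->
     ex_RInt (Fint g b c a) 1 x /\ Rabs (RInt (Fint g b c a) 1 x) <= Mall * Rpower x b / c).
  { intros b c a x Hb Hc Ha Hx.
    assert (Hb' : 1/2 <= b <= 1) by lra.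
    assert (Ha' : 1 <= a) by lra.
    destruct (zero_piece g b c a ltac:(lra) Hg0) as [Z1 Z2].
    assert (Z3 : Rabs (RInt (Fint g b c a) 1 (exp a)) <= 0 * Rpower (exp a) b / c).
    { rewrite Z2, Rabs_R0. right; field; lra. }
    assert (E1 : 1 <= exp a) by (rewrite <- exp_0; apply exp_le'; lra).
    assert (E12 : exp a <= exp (a * 2)) by (apply exp_le'; lra).
    assert (E23 : exp (a * 2) <= exp (a * 3)) by (apply exp_le'; lra).
    assert (E34 : exp (a * 3) <= exp (a * 4)) by (apply exp_le'; lra).
    assert (E45 : exp (a * 4) <= exp (a * (4 + 1))) by (apply exp_le'; lra).
    replace (5 * a) with (a * (4 + 1)) in Hx by ring.
    assert (Q1 : exp (a * 1) = exp a) by (f_equal; ring).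
    assert (Q2 : exp (a * (1 + 1)) = exp (a * 2)) by (f_equal; ring).
    assert (Q3 : exp (a * (2 + 1)) = exp (a * 3)) by (f_equal; ring).
    assert (Q4 : exp (a * (3 + 1)) = exp (a * 4)) by (f_equal; ring).
    pose proof (exp_pos a).
    destruct (Rle_or_lt x (exp (a * 2))) as [C1|C1].
    { destruct (P1 b c a (exp a) x Hb' Hc Ha' ltac:(lra) ltac:(lra) ltac:(lra)) as [A1 A2].
      destruct (step _ 1 (exp a) x 0 M1 b c ltac:(lra) ltac:(lra) ltac:(lra) ltac:(lra) ltac:(lra) Z1 Z3 A1 A2) as [B1 B2].
      split; auto. eapply weaken; [|lra|exact B2]. unfold Mall; lra. }
    destruct (P1 b c a (exp a) (exp (a * 2)) Hb' Hc Ha' ltac:(lra) ltac:(lra) ltac:(lra)) as [A1 A2].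
    destruct (step _ 1 (exp a) (exp (a * 2)) 0 M1 b c ltac:(lra) ltac:(lra) ltac:(lra) ltac:(lra) ltac:(lra) Z1 Z3 A1 A2) as [B1 B2].
    destruct (Rle_or_lt x (exp (a * 3))) as [C2|C2].
    { destruct (P2 b c a (exp (a * 2)) x Hb' Hc Ha' ltac:(lra) ltac:(lra) ltac:(lra)) as [A3 A4].
      destruct (step _ 1 (exp (a * 2)) x (0 + M1) M2 b c ltac:(lra) ltac:(lra) ltac:(lra) ltac:(lra) ltac:(lra) B1 B2 A3 A4) as [B3 B4].
      split; auto. eapply weaken; [|lra|exact B4]. unfold Mall; lra. }
    destruct (P2 b c a (exp (a * 2)) (exp (a * 3)) Hb' Hc Ha' ltac:(lra) ltac:(lra) ltac:(lra)) as [A3 A4].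
    destruct (step _ 1 (exp (a * 2)) (exp (a * 3)) (0 + M1) M2 b c ltac:(lra) ltac:(lra) ltac:(lra) ltac:(lra) ltac:(lra) B1 B2 A3 A4) as [B3 B4].
    destruct (Rle_or_lt x (exp (a * 4))) as [C3|C3].
    { destruct (P3 b c a (exp (a * 3)) x Hb' Hc Ha' ltac:(lra) ltac:(lra) ltac:(lra)) as [A5 A6].
      destruct (step _ 1 (exp (a * 3)) x (0 + M1 + M2) M3 b c ltac:(lra) ltac:(lra) ltac:(lra) ltac:(lra) ltac:(lra) B3 B4 A5 A6) as [B5 B6].
      split; auto. eapply weaken; [|lra|exact B6]. unfold Mall; lra. }
    destruct (P3 b c a (exp (a * 3)) (exp (a * 4)) Hb' Hc Ha' ltac:(lra) ltac:(lra) ltac:(lra)) as [A5 A6].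
    destruct (step _ 1 (exp (a * 3)) (exp (a * 4)) (0 + M1 + M2) M3 b c ltac:(lra) ltac:(lra) ltac:(lra) ltac:(lra) ltac:(lra) B3 B4 A5 A6) as [B5 B6].
    destruct (P4 b c a (exp (a * 4)) x Hb' Hc Ha' ltac:(lra) ltac:(lra) ltac:(lra)) as [A7 A8].
    destruct (step _ 1 (exp (a * 4)) x (0 + M1 + M2 + M3) M4 b c ltac:(lra) ltac:(lra) ltac:(lra) ltac:(lra) ltac:(lra) B5 B6 A7 A8) as [B7 B8].
    split; auto. eapply weaken; [|lra|exact B8]. unfold Mall; lra. }
  assert (HMall : 0 <= Mall) by (unfold Mall; lra).
  exists (Mall + 4 + 2 * Rabs K1 + 6 * Rabs K2).
  intros b c a x Hb Hc Ha.
  change (DMV_I g b c a x) with (- RInt (Fint g b c a) 1 x).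
  pose proof (Rabs_pos K1). pose proof (Rabs_pos K2).
  split.
  - intros Hx.
    assert (HE1 : exp a <= exp (5 * a)) by (apply exp_le'; lra).
    destruct (Mid b c a (exp (5 * a)) Hb Hc Ha ltac:(lra)) as [A1 A2].
    destruct (tail g K1 K2 Hgc Hgd HK1 HK2 b c a x Hb Hc Ha Hx) as [T1 T2].
    rewrite <- (RInt_Chasles (V:=R_CompleteNormedModule) _ 1 (exp (5 * a)) x A1 T1).
    unfold plus; simpl.
    set (J1 := RInt (Fint g b c a) 1 (exp (5 * a))) in *.
    set (J2 := RInt (Fint g b c a) (exp (5 * a)) x) in *.
    set (S := Rpower x b * sin (c * ln x)) in *.
    replace (- (J1 + J2) - - S / c) with (- J1 - (J2 - S / c)) by (field; lra).
    eapply Rle_trans; [apply Rabs_triang|]. rewrite Rabs_Ropp, Rabs_Ropp.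
    assert (Hw : Rpower (exp (5 * a)) b = exp (5 * a * b)) by (unfold Rpower; rewrite ln_exp; f_equal; ring).
    rewrite Hw in A2.
    pose proof (exp_pos (5 * a * b)) as Hp1.
    assert (Hp2 : 0 < Rpower x (b - 1 / (2 * a))) by apply exp_pos.
    assert (Hp3 : 0 < Rpower x b) by apply exp_pos.
    assert (Hc2 : 1 <= c ^ 2) by nra.
    assert (Mall * exp (5 * a * b) / c <= Mall * exp (5 * a * b)).
    { unfold Rdiv. rewrite Rmult_assoc. apply Rmult_le_compat_l; auto.
      rewrite <- (Rmult_1_r (exp (5 * a * b))) at 2. apply Rmult_le_compat_l; [lra|].
      rewrite <- Rinv_1. apply Rinv_le_contravar; lra. }
    set (X1 := Rpower x (b - 1 / (2 * a)) / c).
    set (X2 := Rpower x b / c ^ 2).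
    set (X3 := exp (5 * a * b)) in *.
    assert (0 <= X1) by (unfold X1; apply Rmult_le_pos; [lra|left; apply Rinv_0_lt_compat; lra]).
    assert (0 <= X2) by (unfold X2; apply Rmult_le_pos; [lra|left; apply Rinv_0_lt_compat; lra]).
    replace ((6 * Rabs K2 + 2 * Rabs K1) * Rpower x (b - 1 / (2 * a)) / c) with ((6 * Rabs K2 + 2 * Rabs K1) * X1) in T2 by (unfold X1; field; lra).
    replace (2 * Rpower x b / c ^ 2) with (2 * X2) in T2 by (unfold X2; field; lra).
    assert (F1 : 0 <= (Mall + 4) * X1) by (apply Rmult_le_pos; lra).
    assert (F2 : 0 <= (Mall + 2 + 2 * Rabs K1 + 6 * Rabs K2) * X2) by (apply Rmult_le_pos; lra).
    assert (F3 : 0 <= (2 + 6 * Rabs K2) * X3) by (apply Rmult_le_pos; lra).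
    assert (Mall * X3 / c = Mall * (X3 / c)) by (field; lra).
    match goal with H : Mall * X3 / c <= Mall * X3 |- _ => idtac end.
    assert (HJ1 : Rabs J1 <= Mall * X3) by lra.
    assert (Hsum : (Mall + 4 + 2 * Rabs K1 + 6 * Rabs K2) * (X1 + X2 + X3) =
       Mall * X3 + (2 * (1 + Rabs K1) * X3 + (6 * Rabs K2 + 2 * Rabs K1) * X1 + 2 * X2)
       + (Mall + 4) * X1 + (Mall + 2 + 2 * Rabs K1 + 6 * Rabs K2) * X2 + (2 + 6 * Rabs K2) * X3) by ring.
    replace (Rpower x b / (c * (c * 1))) with X2 by (unfold X2; simpl; ring). rewrite Hsum. lra.
  - intros Hx.
    destruct (Mid b c a x Hb Hc Ha ltac:(lra)) as [A1 A2].
    rewrite Rabs_Ropp. eapply Rle_trans; [exact A2|].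
    assert (0 <= Rpower x b / c) by (apply Rmult_le_pos; [left; apply exp_pos|left; apply Rinv_0_lt_compat; lra]).
    replace (Mall * Rpower x b / c) with (Mall * (Rpower x b / c)) by (field; lra).
    apply Rmult_le_compat_r; lra.
Qed.
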